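(* Let $W$ be an eventually periodic subset of $\mathbb{Z}^d$ with periods $u_1,\dots,u_d$, and let $\mathscr{W}_1,\mathcal{W}$ be as defined in the context. Suppose $\mathscr{W}_1$ is nonempty. Then $W$ has a minimal complement in $\mathbb{Z}^d$ if either of the following holds: (1) $\pi(\mathcal{W}\cup\mathscr{W}_1)$ is a translate of a subgroup of $\mathbb{Z}^d/\mathcal{L}$; (2) every nontrivial element of $\mathbb{Z}^d/\mathcal{L}$ has order two, and either (a) each of $\pi(\mathscr{W}_1),\pi(\mathcal{W})$ is a singleton, or (b) the complement of $\pi(\mathscr{W}_1\cup\mathcal{W})$ in $\mathbb{Z}^d/\mathcal{L}$ is a singleton.
   Context: $d\geqslant1$, $\mathbb{N}=\{0,1,2,\dots\}$. Let $u_1,\dots,u_d\in\mathbb{Z}^d$ satisfy no nontrivial $\mathbb{Z}$-linear relation, $\mathcal{L}=\mathbb{Z}u_1+\dots+\mathbb{Z}u_d$, $P=\mathbb{N}u_1+\dots+\mathbb{N}u_d$, $\pi:\mathbb{Z}^d\to\mathbb{Z}^d/\mathcal{L}$ the quotient map. A nonempty $X\subseteq\mathbb{Z}^d$ is eventually periodic with periods $u_1,\dots,u_d$ if $X\subseteq F+P$ for some nonempty finite $F\subseteq\mathbb{Z}^d$ and $x+P\subseteq X$ for all but finitely many $x\in X$. For such $W$: $\mathscr{W}=\{w\in W:w+P\not\subseteq W\}$; $\mathcal{W}=\{w\in W\setminus\mathscr{W}:(w-P)\cap(W\setminus\mathscr{W})=\{w\}\}$; $\mathscr{W}_1$ is the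 set of elements of $\mathscr{W}$ congruent modulo $\mathcal{L}$ to no element of $\mathcal{W}$. A nonempty $M\subseteq\mathbb{Z}^d$ is a complement of $W$ if $M+W=\mathbb{Z}^d$, and a minimal complement if no proper subset of $M$ is a complement of $W$. *)

(* Defs.v *)
From mathcomp Require Import all_boot all_order all_algebra.
Set Implicit Arguments. Unset Strict Implicit. Unset Printing Implicit Defensive.
Import Order.TTheory GRing.Theory Num.Theory.
Local Open Scope ring_scope.

Definition Zd (d : nat) := 'rV[int]_d.
Definition zset (d : nat) := Zd d -> Prop.

Section Defs.
Variables (d : nat) (u : 'I_d -> Zd d).

Definition Zfree : Prop :=
  forall c : 'I_d -> int, \sum_(i < d) (u i) *~ (c i) = 0 -> forall i, c i = 0.

Definition inL (x : Zd d) : Prop :=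
  exists c : 'I_d -> int, x = \sum_(i < d) (u i) *~ (c i).

Definition inP (x : Zd d) : Prop :=
  exists c : 'I_d -> nat, x = \sum_(i < d) (u i) *+ (c i).

Definition congL (x y : Zd d) : Prop := inL (x - y).

Definition eventually_periodic (X : zset d) : Prop :=
  (exists x, X x) /\
  (exists F : seq (Zd d), F != [::] /\
     forall x, X x -> exists2 f, f \in F & inP (x - f)) /\
  (exists E : seq (Zd d),
     forall x, X x -> x \notin E -> forall p, inP p -> X (x + p)).

Definition scriptW (W : zset d) (w : Zd d) : Prop :=
  W w /\ ~ (forall p, inP p -> W (w + p)).

Definition calW (W : zset d) (w : Zd d) : Prop :=
  (W w /\ ~ scriptW W w) /\
  (forall v, (W v /\ ~ scriptW W v) -> (exists p, inP p /\ v = w - p) -> v = w).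

Definition scriptW1 (W : zset d) (w : Zd d) : Prop :=
  scriptW W w /\ forall v, calW W v -> ~ congL w v.

(* subgroups of Z^d containing L: these correspond to subgroups of Z^d/L *)
Definition subgroupZd (H : zset d) : Prop :=
  H 0 /\ forall x y, H x -> H y -> H (x - y).

(* pi(S) as an L-saturated subset of Z^d : x is in it iff pi x \in pi(S) *)
Definition satL (S : zset d) (x : Zd d) : Prop :=
  exists2 s, S s & congL x s.

End Defs.

Definition is_complement (d : nat) (M W : zset d) : Prop :=
  (exists m, M m) /\ forall x, exists m w, [/\ M m, W w & x = m + w].

Definition is_minimal_complement (d : nat) (M W : zset d) : Prop :=
  is_complement M W /\
  forall M' : zset d, (forall x, M' x -> M x) -> (exists x, M x /\ ~ M' x) ->
    ~ is_complement M' W.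

(* Main.v *)
Require Import Defs.
From mathcomp Require Import all_boot all_order all_algebra.
From Stdlib Require Import Classical ClassicalEpsilon.
Set Implicit Arguments. Unset Strict Implicit. Unset Printing Implicit Defensive.
Import Order.TTheory GRing.Theory Num.Theory.
Local Open Scope ring_scope.
From mathcomp Require Import zify ring.

Ltac zeq := apply/rowP => ?; rewrite !mxE; ring.

Section Basic.
Variables (d : nat) (u : 'I_d -> Zd d).

Lemma inL0 : inL u 0.
Proof. by exists (fun _ => 0); rewrite big1 // => i _; rewrite mulr0z. Qed.

Lemma inLD x y : inL u x -> inL u y -> inL u (x + y).
Proof.
move=> [a ->] [b ->]; exists (fun i => a i + b i).
by rewrite -big_split /=; apply: eq_bigr => i _; rewrite mulrzDr.
Qed.

Lemma inLN x : inL u x -> inL u (- x).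
Proof.
move=> [a ->]; exists (fun i => - a i).
by rewrite -sumrN; apply: eq_bigr => i _; rewrite mulrNz.
Qed.

Lemma inLB x y : inL u x -> inL u y -> inL u (x - y).
Proof. by move=> hx hy; apply: inLD => //; apply: inLN. Qed.

Lemma inP0 : inP u 0.
Proof. by exists (fun _ => 0%N); rewrite big1. Qed.

Lemma inPD x y : inP u x -> inP u y -> inP u (x + y).
Proof.
move=> [a ->] [b ->]; exists (fun i => (a i + b i)%N).
by rewrite -big_split /=; apply: eq_bigr => i _; rewrite mulrnDr.
Qed.

Lemma inPL x : inP u x -> inL u x.
Proof.
move=> [a ->]; exists (fun i => (a i)%:Z).
by apply: eq_bigr => i _.
Qed.

Lemma inPsig n : inP u ((\sum_i u i) *+ n).
Proof. exists (fun _ => n). rewrite sumrMnl. done. Qed.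

Lemma inL_nonneg (c : 'I_d -> int) : (forall i, 0 <= c i) -> inP u (\sum_i u i *~ c i).
Proof.
move=> hc; exists (fun i => `|c i|%N); apply: eq_bigr => i _.
by rewrite -mulrz_nat natz gez0_abs.
Qed.

Lemma congL_refl x : congL u x x.
Proof. by rewrite /congL subrr; apply: inL0. Qed.

Lemma congL_sym x y : congL u x y -> congL u y x.
Proof. by rewrite /congL => h; rewrite -opprB; apply: inLN. Qed.

Lemma congL_trans x y z : congL u x y -> congL u y z -> congL u x z.
Proof.
rewrite /congL => h1 h2; have -> : x - z = (x - y) + (y - z) by rewrite addrA subrK.
by apply: inLD.
Qed.

End Basic.
Section Greedy.
Variable d : nat.

Lemma chain_fin (l : seq (Zd d)) : forall (P : nat -> Zd d -> Prop),
  (forall n m w, (n <= m)%N -> P m w -> P n w) ->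
  (forall n, exists2 w, w \in l & P n w) -> exists2 w, w \in l & forall n, P n w.
Proof.
elim: l => [|a l IH] P Pmon h.
  by case: (h 0%N).
case: (classic (forall n, P n a)) => [ha|].
  by exists a => //; rewrite inE eqxx.
move=> /not_all_ex_not [n0 hn0].
have [w wl hw] : exists2 w, w \in l & forall n, P (n + n0)%N w.
  apply: (IH (fun n w => P (n + n0)%N w)).
    by move=> n m w nm; apply: Pmon; rewrite leq_add2r.
  move=> n; case: (h (n + n0)%N) => w; rewrite inE => /orP [/eqP ->|wl] hw.
    by exfalso; apply: hn0; apply: Pmon hw; apply: leq_addl.
  by exists w.
exists w; first by rewrite inE wl orbT.
by move=> n; apply: Pmon (hw n); apply: leq_addr.
Qed.

Definition Qc (Y S M : zset d) :=
  forall y, Y y -> exists m w, [/\ M m, S w & y = m + w].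

Variables (K Y S : zset d) (E : seq (Zd d)).
Hypothesis SE : forall w, S w -> w \in E.
Hypothesis QK : Qc Y S K.

Definition rem1 (M : zset d) (x : Zd d) : zset d := fun z => M z /\ z <> x.

Fixpoint seqM (n : nat) : zset d :=
  match n with
  | 0%N => K
  | n'.+1 =>
    match (unpickle n' : option 'rV[int]_d) with
    | Some x => if excluded_middle_informative (Qc Y S (rem1 (seqM n') x))
                then rem1 (seqM n') x else seqM n'
    | None => seqM n'
    end
  end.

Lemma seqM_dec n x : seqM n.+1 x -> seqM n x.
Proof.
rewrite /=; case: (unpickle n) => [y|//].
by case: excluded_middle_informative => _ // [].
Qed.

Lemma seqM_mon n m x : (n <= m)%N -> seqM m x -> seqM n x.
Proof.
move=> /subnKC <-; elim: (m - n)%N => [|k IH]; first by rewrite addn0.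
by rewrite addnS => /seqM_dec /IH.
Qed.

Lemma seqM_Q n : Qc Y S (seqM n).
Proof.
elim: n => [|n IH] //=; case: (unpickle n) => [y|//].
by case: excluded_middle_informative.
Qed.

Definition Minf : zset d := fun x => forall n, seqM n x.

Lemma Minf_Q : Qc Y S Minf.
Proof.
move=> y Yy.
have h : forall n, exists2 w, w \in E & (S w /\ seqM n (y - w)).
  move=> n; case: (seqM_Q n Yy) => m [w [Mm Sw ->]].
  by exists w; [apply: SE | split => //; rewrite addrK].
have [w wE hw] := @chain_fin E (fun (n : nat) (w : Zd d) => S w /\ seqM n (y - w))
   (fun (n m : nat) (w : Zd d) nm (hh : S w /\ seqM m (y - w)) => conj hh.1 (seqM_mon nm hh.2)) h.
exists (y - w), w; split => //; first by move=> n; case: (hw n).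
  by case: (hw 0%N).
by rewrite subrK.
Qed.

Lemma Minf_min M' : (forall x, M' x -> Minf x) -> Qc Y S M' ->
  forall x, Minf x -> M' x.
Proof.
move=> sub QM' x Mx; apply: NNPP => nM'x.
have := Mx (pickle (x : 'rV[int]_d)).+1; rewrite /= pickleK.
case: excluded_middle_informative => [_ [_]//|].
case; move=> y Yy; case: (QM' y Yy) => m [w [M'm Sw ->]].
exists m, w; split => //; split; first by apply: sub.
by move=> mx; apply: nM'x; rewrite -mx.
Qed.

Lemma Minf_sub x : Minf x -> K x.
Proof. by move=> h; apply: (h 0%N). Qed.

End Greedy.

Section Main.
Variables (d : nat) (u : 'I_d -> Zd d) (W : zset d).
Hypothesis Zf : Zfree u.
Hypothesis EP : eventually_periodic u W.

Lemma Zfree_nat (a b : 'I_d -> nat) :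
  \sum_i u i *+ a i = \sum_i u i *+ b i -> forall i, a i = b i.
Proof.
move=> h i.
have := Zf (c := fun i => (a i)%:Z - (b i)%:Z).
have e : \sum_(i < d) u i *~ ((a i)%:Z - (b i)%:Z) = 0.
  under eq_bigr => j _ do rewrite mulrzBr.
  by rewrite sumrB; apply/eqP; rewrite subr_eq0; apply/eqP; exact: h.
move=> /(_ e i) /eqP; rewrite subr_eq0 => /eqP; by case.
Qed.

Lemma bound_F w (F : seq (Zd d)) : exists B, forall f, f \in F ->
  forall c : 'I_d -> nat, w - f = \sum_i u i *+ c i -> (\sum_i c i <= B)%N.
Proof.
elim: F => [|f0 F [B IH]]; first by exists 0%N.
case: (classic (exists c0 : 'I_d -> nat, w - f0 = \sum_i u i *+ c0 i)).
  move=> [c0 h0]; exists (B + \sum_i c0 i)%N => f; rewrite inE => /orP [/eqP ->|fF] c hc.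
    have ec : forall i, c i = c0 i by apply: Zfree_nat; rewrite -hc.
    by rewrite (eq_bigr _ (fun i _ => ec i)) leq_addl.
  by apply: leq_trans (IH f fF c hc) (leq_addr _ _).
move=> hn; exists B => f; rewrite inE => /orP [/eqP ->|fF] c hc.
  by exfalso; apply: hn; exists c.
exact: IH f fF c hc.
Qed.

Lemma WF w : W w -> ~ scriptW u W w -> exists v, calW u W v /\ congL u w v.
Proof.
move=> Ww nsw; apply: NNPP => H0.
have [_ [[F [_ HF]] _]] := EP.
have [B HB] := bound_F w F.
have claim : forall k, exists v (c : 'I_d -> nat),
    [/\ W v, ~ scriptW u W v, w - v = \sum_i u i *+ c i & (k <= \sum_i c i)%N].
  elim=> [|k [v [c [Wv nsv ev kc]]]].
    by exists w, (fun _ => 0%N); split => //; rewrite subrr big1.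
  have ncal : ~ calW u W v.
    move=> cv; apply: H0; exists v; split => //.
    by rewrite /congL ev; apply: inPL; exists c.
  have : ~ (forall v', (W v' /\ ~ scriptW u W v') ->
             (exists p, inP u p /\ v' = v - p) -> v' = v).
    by move=> h; apply: ncal; split.
  move=> /not_all_ex_not [v' hv'].
  have [[Wv' nsv'] hv2] := imply_to_and _ _ hv'.
  have [[p [[q ep] ev']] nev] := imply_to_and _ _ hv2.
  exists v', (fun i => c i + q i)%N; split => //.
    rewrite ev' opprB addrCA addrC ev ep -big_split /=.
    by apply: eq_bigr => i _; rewrite mulrnDr.
  rewrite big_split /=.
  case: (posnP (\sum_i q i)) => [/eqP|qpos].
    rewrite sum_nat_eq0 => /forallP hq; exfalso; apply: nev.
    rewrite ev' ep big1 ?subr0 // => i _.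
    by have := hq i; rewrite implyTb => /eqP ->.
  by rewrite -addn1 leq_add.
have [v [c [Wv _ ev kc]]] := claim B.+1.
have [f fF [dd edd]] := HF v Wv.
have : (\sum_i (c i + dd i) <= B)%N.
  apply: (HB f fF); have -> : w - f = (w - v) + (v - f) by rewrite addrA subrK.
  by rewrite ev edd -big_split /=; apply: eq_bigr => i _; rewrite mulrnDr.
rewrite big_split /= => h.
have := leq_trans kc (leq_trans (leq_addr _ _) h).
by rewrite ltnn.
Qed.


Lemma scriptW_E : exists E : seq (Zd d), forall w, scriptW u W w -> w \in E.
Proof.
have [_ [_ [E HE]]] := EP; exists E => w [Ww nall].
by case: (boolP (w \in E)) => // /(HE w Ww) h; exfalso; apply: nall.
Qed.

Lemma calW_W v : calW u W v -> W v.
Proof. by case=> [[]]. Qed.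

Lemma scriptW1_W v : scriptW1 u W v -> W v.
Proof. by case=> [[]]. Qed.

Lemma calW_up t p : calW u W t -> inP u p -> W (t + p).
Proof.
case=> [[Wt nst]] _ hp; apply: NNPP => h; apply: nst; split => // hall.
by apply: h; apply: hall.
Qed.

Lemma L1 w s : W w -> congL u w s -> scriptW1 u W s -> scriptW1 u W w.
Proof.
move=> Ww ws [_ hs]; have ncal : forall v, calW u W v -> ~ congL u w v.
  by move=> v cv wv; apply: (hs v cv); apply: congL_trans (congL_sym ws) wv.
split => //; case: (classic (scriptW u W w)) => // nsw.
by have [v [cv wv]] := WF Ww nsw; exfalso; apply: (ncal v cv).
Qed.

Lemma Tsat w : W w -> satL u (fun s => calW u W s \/ scriptW1 u W s) w.
Proof.
move=> Ww; case: (classic (scriptW1 u W w)) => [h|n1].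
  by exists w; [right | apply: congL_refl].
case: (classic (scriptW u W w)) => [sw|nsw].
  have : ~ (forall v, calW u W v -> ~ congL u w v) by move=> h; apply: n1.
  move=> /not_all_ex_not [v hv].
  have [cv wv] := imply_to_and _ _ hv.
  by exists v; [left | apply: NNPP].
by have [v [cv wv]] := WF Ww nsw; exists v => //; left.
Qed.

Definition sig := \sum_i u i.

Lemma inP_shift N N' x : (N <= N')%N -> inP u (sig *+ N + x) -> inP u (sig *+ N' + x).
Proof.
move=> /subnKC <- h; rewrite mulrnDr addrAC addrC; apply: inPD => //.
exact: inPsig.
Qed.

Lemma bound_E (E : seq (Zd d)) s1 : exists N, forall e, e \in E ->
  inL u (e - s1) -> inP u (sig *+ N + (e - s1)).
Proof.
elim: E => [|e0 E [N IH]]; first by exists 0%N.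
case: (classic (inL u (e0 - s1))) => [[c hc]|hn].
  exists (N + \sum_i `|c i|)%N => e; rewrite inE => /orP [/eqP ->|eE] hL.
    rewrite hc /sig -sumrMnl -big_split /=.
    have -> : \sum_(i < d) (u i *+ (N + \sum_i0 `|c i0|) + u i *~ c i)
      = \sum_(i < d) u i *~ ((N + \sum_i0 `|c i0|)%N%:Z + c i).
      by apply: eq_bigr => i _; rewrite mulrzDr.
    apply: inL_nonneg => i.
    have : (`|c i| <= \sum_i0 `|c i0|)%N by rewrite (bigD1 i) //= leq_addr.
    lia.
  by apply: inP_shift (IH e eE hL); apply: leq_addr.
by exists N => e; rewrite inE => /orP [/eqP ->|eE] hL; [exfalso; apply: hn| apply: IH].
Qed.

Definition Yset (K : zset d) (y : Zd d) :=
  forall m w, K m -> W w -> y = m + w -> scriptW1 u W w.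

Lemma density K M k0 s1 :
  Qc (Yset K) (scriptW1 u W) M -> scriptW1 u W s1 ->
  (forall y, congL u y (k0 + s1) -> Yset K y) ->
  (forall m w, M m -> scriptW1 u W w -> congL u (m + w) (k0 + s1) -> congL u w s1) ->
  forall x t, calW u W t -> congL u (x - t) k0 ->
  exists m w, [/\ M m, W w & x = m + w].
Proof.
move=> QM s1W HY Hrep x t ct xt.
have [E HE] := scriptW_E.
have [N HN] := bound_E E s1.
set z := x - t.
set y := z + s1 - sig *+ N.
have yc : congL u y (k0 + s1).
  rewrite /congL /y.
  have -> : z + s1 - sig *+ N - (k0 + s1) = (z - k0) - sig *+ N.
    by zeq.
  by apply: inLB => //; apply: inPL; apply: inPsig.
have [m [w [Mm w1 ey]]] := QM y (HY y yc).
have ws : congL u w s1.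
  by apply: (Hrep m w Mm w1); rewrite -ey.
have hP := HN w (HE w (proj1 w1)) ws.
exists m, (t + (z - m)); split => //.
  apply: calW_up => //.
  have -> : z - m = sig *+ N + (w - s1).
    have -> : m = y - w by rewrite ey addrK.
    by rewrite /y; zeq.
  exact: hP.
by rewrite /z; zeq.
Qed.

Lemma framework (K : zset d) :
  (forall x, exists m w, [/\ K m, W w & x = m + w]) ->
  (forall M, (forall x, M x -> K x) -> Qc (Yset K) (scriptW1 u W) M ->
     forall x, exists m w, [/\ M m, W w & x = m + w]) ->
  exists M, is_minimal_complement M W.
Proof.
move=> D1 D3; have [E HE] := scriptW_E.
have HE1 : forall w, scriptW1 u W w -> w \in E by move=> w [h _]; apply: HE.
have QK : Qc (Yset K) (scriptW1 u W) K.
  move=> y Yy; have [m [w [Km Ww ey]]] := D1 y.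
  by exists m, w; split => //; exact: Yy m w Km Ww ey.
set M := Minf K (Yset K) (scriptW1 u W).
have Msub : forall x, M x -> K x by move=> x; apply: Minf_sub.
have QM : Qc (Yset K) (scriptW1 u W) M by apply: Minf_Q HE1 QK.
exists M; split.
  split; first by have [m [w [Mm _ _]]] := D3 M Msub QM 0; exists m.
  by move=> x; have [m [w [Mm Ww ex]]] := D3 M Msub QM x; exists m, w.
move=> M' sub [x [Mx nM'x]] [_ cov]; apply: nM'x.
apply: (Minf_min sub) => // y Yy.
have [m [w [M'm Ww ey]]] := cov y.
by exists m, w; split => //; exact: Yy m w (Msub m (sub m M'm)) Ww ey.
Qed.

Lemma case1 (H : zset d) g :
  subgroupZd H -> (forall x, inL u x -> H x) ->
  (forall x, satL u (fun s => calW u W s \/ scriptW1 u W s) x <-> H (x - g)) ->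
  (exists s1, scriptW1 u W s1) -> exists M, is_minimal_complement M W.
Proof.
move=> [H0 Hsub] HL Hiff [s1 s1W].
have HN : forall x, H x -> H (- x) by move=> x hx; have := Hsub 0 x H0 hx; rewrite sub0r.
have HD : forall x y, H x -> H y -> H (x + y).
  by move=> x y hx hy; rewrite -[y]opprK; apply: Hsub => //; apply: HN.
pose Hb (x z : 'rV[int]_d) : bool :=
  if excluded_middle_informative (H (z - x)) then true else false.
have HbE : forall x z, Hb x z <-> H (z - x).
  by move=> x z; rewrite /Hb; case: excluded_middle_informative.
have exr : forall x, exists z, Hb x z by move=> x; exists x; apply/HbE; rewrite subrr.
pose r x := xchoose (exr x).
have r_spec : forall x, H (r x - x) by move=> x; apply/HbE; apply: xchooseP.
have r_eq : forall x y, H (x - y) -> r x = r y.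
  move=> x y hxy; apply: eq_xchoose => z.
  apply/idP/idP => /HbE h; apply/HbE.
    rewrite (_ : z - y = (z - x) + (x - y)); last by zeq.
    by apply: HD.
  rewrite (_ : z - x = (z - y) - (x - y)); last by zeq.
  by apply: Hsub.
pose K k := inL u (k + g - r (k + g)).
have Tw : forall w, W w -> H (w - g) by move=> w Ww; apply/Hiff; apply: Tsat.
have KL : forall k k', K k -> congL u k' k -> K k'.
  move=> k k' Kk kk; rewrite /K (r_eq (k' + g) (k + g)).
    rewrite (_ : k' + g - r (k + g) = (k' - k) + (k + g - r (k + g))); last by zeq.
  by apply: inLD.
  by apply: HL; rewrite (_ : k' + g - (k + g) = k' - k); last by zeq.
have Kclaim : forall m k w w', K m -> K k -> W w -> W w' ->
    congL u (m + w) (k + w') -> congL u w w'.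
  move=> m k w w' Km Kk Ww Ww' l.
  have hww : H (w - w').
    by rewrite (_ : w - w' = (w - g) - (w' - g)); [apply: Hsub; apply: Tw | zeq].
  have hkm : H (k - m).
    rewrite (_ : k - m = (w - w') - (m + w - (k + w'))); last by zeq.
    by apply: Hsub => //; apply: HL.
  have req : r (k + g) = r (m + g).
    by apply: r_eq; rewrite (_ : k + g - (m + g) = k - m); last by zeq.
  have lmk : inL u (m - k).
    rewrite (_ : m - k = (m + g - r (m + g)) - (k + g - r (k + g))); last by rewrite req; zeq.
    by apply: inLB.
  rewrite /congL (_ : w - w' = (m + w - (k + w')) - (m - k)); last by zeq.
  by apply: inLB.
have Yclass : forall y k s, K k -> scriptW1 u W s -> congL u y (k + s) -> Yset K y.
  move=> y k s Kk sW ys m w Km Ww ey.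
  apply: (L1 Ww _ sW); apply: (Kclaim m k w s Km Kk Ww (scriptW1_W sW)).
  by rewrite -ey.
have Kk0 : forall x, K (r x - g).
  move=> x; rewrite /K subrK (r_eq (r x) x (r_spec x)) subrr; exact: inL0.
have Tx : forall x, satL u (fun s => calW u W s \/ scriptW1 u W s) (x - (r x - g)).
  move=> x; apply/Hiff.
  rewrite (_ : x - (r x - g) - g = - (r x - x)); last by zeq.
  by apply: HN.
apply: (framework (K := K)).
  move=> x; have [t ht xt] := Tx x.
  exists (x - t), t; split.
  - apply: (KL _ _ (Kk0 x)); rewrite /congL.
    by rewrite (_ : x - t - (r x - g) = x - (r x - g) - t); last by zeq.
  - by case: ht => [/calW_W|/scriptW1_W].
  - by zeq.
move=> M Msub QM x; have [t ht xt] := Tx x.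
case: ht => [ct|tW].
  apply: (density (K := K) (k0 := r x - g) QM s1W) ct _.
  - by move=> y; apply: Yclass (Kk0 x) s1W.
  - move=> m w Mm w1 c.
    exact: (Kclaim m _ w s1 (Msub m Mm) (Kk0 x) (scriptW1_W w1) (scriptW1_W s1W) c).
  - by rewrite /congL (_ : x - t - (r x - g) = x - (r x - g) - t); last by zeq.
have Yx : Yset K x.
  apply: (Yclass x (r x - g) t (Kk0 x) tW); rewrite /congL.
  by rewrite (_ : x - (r x - g + t) = x - (r x - g) - t); last by zeq.
have [m [w [Mm w1 ex]]] := QM x Yx.
by exists m, w; split => //; apply: scriptW1_W.
Qed.

Lemma case2a a b :
  (forall x, inL u (x *+ 2)) ->
  scriptW1 u W a -> (forall w, scriptW1 u W w -> congL u w a) ->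
  calW u W b -> (forall w, calW u W w -> congL u w b) ->
  exists M, is_minimal_complement M W.
Proof.
move=> two ha ha' hb hb'.
apply: (case1 (H := fun x => inL u x \/ congL u x (a - b)) (g := a)); last by exists a.
- split; first by left; apply: inL0.
  move=> x y [hx|hx] [hy|hy].
  + by left; apply: inLB.
  + right; rewrite /congL (_ : x - y - (a - b) = (x - (y - (a - b))) - (a - b) *+ 2); last by zeq.
    by apply: inLB => //; apply: inLB.
  + right; rewrite /congL (_ : x - y - (a - b) = (x - (a - b)) - y); last by zeq.
    by apply: inLB.
  + left; rewrite (_ : x - y = (x - (a - b)) - (y - (a - b))); last by zeq.
    by apply: inLB.
- by move=> x hx; left.
move=> x; split.
  move=> [s [cs|s1] xs].
    right; have sb := hb' s cs; rewrite /congL.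
    rewrite (_ : x - a - (a - b) = ((x - s) + (s - b)) - (a - b) *+ 2); last by zeq.
    by apply: inLB => //; apply: inLD.
  left; have sa := ha' s s1.
  by rewrite (_ : x - a = (x - s) + (s - a)); [apply: inLD | zeq].
move=> [h|h].
  by exists a; [right|].
exists b; [by left|]; rewrite /congL.
rewrite (_ : x - b = (x - a - (a - b)) + (a - b) *+ 2); last by zeq.
by apply: inLD.
Qed.

Lemma case2b c s1 :
  (forall x, inL u (x *+ 2)) ->
  (forall x, ~ satL u (fun s => scriptW1 u W s \/ calW u W s) x <-> congL u x c) ->
  scriptW1 u W s1 -> exists M, is_minimal_complement M W.
Proof.
move=> two hc s1W.
have Tw' : forall w, W w -> ~ congL u w c.
  move=> w Ww wc; apply: ((hc w).2 wc).
  have [s hs ws] := Tsat Ww; exists s => //; case: hs; auto.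
have nc : forall t, calW u W t -> ~ congL u t c.
  by move=> t ct; apply: Tw'; apply: calW_W.
pose e := c + s1.
pose K k := inL u k \/ congL u k e.
have YY : forall x, ~ (exists t, calW u W t /\ congL u x t) ->
    ~ (exists t, calW u W t /\ congL u (x - e) t) -> Yset K x.
  move=> x n1 n2 m w Km Ww ex.
  have [s hs ws] := Tsat Ww.
  case: Km => [hm|hm].
    have xw : congL u x w by rewrite /congL ex addrK.
    case: hs => [cs|s1s]; last exact: (L1 Ww ws s1s).
    by exfalso; apply: n1; exists s; split => //; apply: congL_trans xw ws.
  have xw : congL u (x - e) w.
    by rewrite /congL ex (_ : m + w - e - w = m - e); last by zeq.
  case: hs => [cs|s1s]; last exact: (L1 Ww ws s1s).
  by exfalso; apply: n2; exists s; split => //; apply: congL_trans xw ws.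
apply: (framework (K := K)).
  move=> x; case: (classic (congL u x c)) => [xc|nxc].
    exists (x - s1), s1; split.
    - right; rewrite /congL /e (_ : x - s1 - (c + s1) = (x - c) - s1 *+ 2); last by zeq.
      by apply: inLB.
    - exact: scriptW1_W.
    - by zeq.
  have : satL u (fun s => scriptW1 u W s \/ calW u W s) x.
    by apply: NNPP => h; apply: nxc; apply/hc.
  move=> [t ht xt]; exists (x - t), t; split.
  - by left.
  - by case: ht => [/scriptW1_W|/calW_W].
  - by zeq.
move=> M Msub QM x.
case: (classic (exists t, calW u W t /\ congL u x t)) => [[t [ct xt]]|n1].
  apply: (density (K := K) (k0 := 0) QM s1W) ct _.
  - move=> y ys; apply: YY.
      move=> [t' [ct' yt']]; apply: (proj2 s1W t' ct').
      apply: congL_trans yt'; apply: congL_sym.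
      by rewrite /congL (_ : y - s1 = y - (0 + s1)); last by zeq.
    move=> [t' [ct' yt']]; apply: (nc t' ct'); rewrite /congL.
    rewrite (_ : t' - c = ((y - (0 + s1)) - (y - e - t')) - c *+ 2); last by rewrite /e; zeq.
    by apply: inLB => //; apply: inLB.
  - move=> m w Mm w1 mw; case: (Msub m Mm) => [hm|hm].
      rewrite /congL (_ : w - s1 = (m + w - (0 + s1)) - m); last by zeq.
      by apply: inLB.
    exfalso; apply: (Tw' w (scriptW1_W w1)); rewrite /congL.
    rewrite (_ : w - c = ((m + w - (0 + s1)) - (m - e)) - c *+ 2); last by rewrite /e; zeq.
    by apply: inLB => //; apply: inLB.
  - by rewrite /congL subr0.
case: (classic (exists t, calW u W t /\ congL u (x - e) t)) => [[t [ct xt]]|n2].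
  apply: (density (K := K) (k0 := e) QM s1W) ct _.
  - move=> y ys; apply: YY.
      move=> [t' [ct' yt']]; apply: (nc t' ct'); rewrite /congL.
      rewrite (_ : t' - c = ((y - (e + s1)) - (y - t')) + s1 *+ 2); last by rewrite /e; zeq.
      by apply: inLD => //; apply: inLB.
    move=> [t' [ct' yt']]; apply: (proj2 s1W t' ct'); rewrite /congL.
    rewrite (_ : s1 - t' = (y - e - t') - (y - (e + s1))); last by zeq.
    by apply: inLB.
  - move=> m w Mm w1 mw; case: (Msub m Mm) => [hm|hm].
      exfalso; apply: (Tw' w (scriptW1_W w1)); rewrite /congL.
      rewrite (_ : w - c = ((m + w - (e + s1)) - m) + s1 *+ 2); last by rewrite /e; zeq.
      by apply: inLD => //; apply: inLB.
    rewrite /congL (_ : w - s1 = (m + w - (e + s1)) - (m - e)); last by zeq.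
    by apply: inLB.
  - by rewrite /congL (_ : x - t - e = x - e - t); last by zeq.
have [m [w [Mm w1 ex]]] := QM x (YY x n1 n2).
by exists m, w; split => //; apply: scriptW1_W.
Qed.

End Main.

Unset Implicit Arguments.

Theorem proposition4p21 (d : nat) (u : 'I_d -> Zd d) (W : zset d) :
  (0 < d)%N ->
  Zfree u ->
  eventually_periodic u W ->
  (exists w, scriptW1 u W w) ->
  ( (* (1) pi(calW cup scriptW1) is a translate g + H of a subgroup H of Z^d/L,
         H represented by its preimage, a subgroup of Z^d containing L *)
    (exists (H : zset d) (g : Zd d),
       [/\ subgroupZd H, (forall x, inL u x -> H x) &
           forall x, satL u (fun s => calW u W s \/ scriptW1 u W s) x <-> H (x - g)])
    \/
    (* (2) every element of Z^d/L has order dividing 2 *)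
    ((forall x : Zd d, inL u (x *+ 2)) /\
     ( (* (a) pi(scriptW1) and pi(calW) are singletons *)
       ((exists a, scriptW1 u W a /\ forall w, scriptW1 u W w -> congL u w a) /\
        (exists b, calW u W b /\ forall w, calW u W w -> congL u w b))
       \/
       (* (b) the complement of pi(scriptW1 cup calW) in Z^d/L is a singleton *)
       (exists c : Zd d, forall x,
          ~ satL u (fun s => scriptW1 u W s \/ calW u W s) x <-> congL u x c)))) ->
  exists M : zset d, is_minimal_complement M W.
Proof.
move=> _ Zf EP hs1 [[H [g [sg HL Hiff]]]|[two [[[a [ha ha']] [b [hb hb']]]|[c hc]]]].
- exact (case1 Zf EP sg HL Hiff hs1).
- exact (case2a Zf EP two ha ha' hb hb').
- by case: hs1 => s1 s1W; exact (case2b Zf EP two hc s1W).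
Qed.
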